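(* Let $F$ be a cellular automaton on $A^{\mathbb N}$. Then $\mathfrak d_L(F(x),x)=0$ for all $x\in A^{\mathbb N}$ if and only if there exists $k\in\mathbb N$ such that $F=\sigma^k$.
   Context: $A$ is a finite alphabet; $\sigma(x)_i=x_{i+1}$; $x_{[i,j)}=x_i\cdots x_{j-1}$. A cellular automaton with diameter $\delta\ge1$ is $F(x)_i=f(x_{[i,i+\delta)})$ for a local rule $f:A^\delta\to A$. The Levenshtein distance is $d_L(u,v)=\frac{|u|+|v|}{2}-\ell$, $\ell$ the length of a longest common subsequence of $u,v$; the Feldman pseudo-metric is $\mathfrak d_L(x,y)=\limsup_{l\to\infty}d_L(x_{[0,l)},y_{[0,l)})/l$. *)

(* Defs.v *)
From HB Require Import structures.
From mathcomp Require Import all_boot all_order all_algebra.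
From mathcomp Require Import all_classical all_reals all_analysis.
From mathcomp Require Import Rstruct Rstruct_topology.
Set Implicit Arguments. Unset Strict Implicit. Unset Printing Implicit Defensive.
Import Order.TTheory GRing.Theory Num.Theory.
Local Open Scope ring_scope.

Section Defs.
Variable A : finType.

Definition config := nat -> A.

Definition sigma (x : config) : config := fun i => x i.+1.

Definition factor (x : config) (i j : nat) : seq A := mkseq (fun n => x (i + n)) (j - i).

Definition CA (delta : nat) (f : delta.-tuple A -> A) (x : config) : config :=
  fun i => f [tuple x (i + val j) | j < delta].

Definition lcs (u v : seq A) : nat :=
  \max_(m : (size u).-tuple bool | subseq (mask m u) v) size (mask m u).

Definition levenshtein (u v : seq A) : Rdefinitions.R :=
  ((size u + size v)%:R / 2 - (lcs u v)%:R)%R.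

Definition feldman (x y : config) : \bar Rdefinitions.R :=
  limn_esup (fun l : nat => ((levenshtein (factor x 0 l) (factor y 0 l)) / l%:R)%:E).

End Defs.

(* Main.v *)
Require Import Defs.
From mathcomp Require Import all_boot all_order all_algebra.
From mathcomp Require Import all_classical all_reals all_analysis.
From mathcomp Require Import Rstruct Rstruct_topology.
From mathcomp Require Import zify ring lra.
Set Implicit Arguments. Unset Strict Implicit. Unset Printing Implicit Defensive.
Import Order.TTheory GRing.Theory Num.Theory.

Section Comb.
Variable T : eqType.

Lemma subseq_cat_split (s1 s2 t : seq T) : subseq (s1 ++ s2) t ->
  exists t1 t2, [/\ t = t1 ++ t2, subseq s1 t1 & subseq s2 t2].
Proof.
elim: t s1 => [|y t IH] s1.
  rewrite subseq0 => /eqP; case: s1 => // ; case: s2 => // _.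
  by exists [::], [::].
case: s1 => [|x s1] /=.
  by move=> H; exists [::], (y :: t); rewrite sub0seq.
case: eqP => [-> | neq] H.
  have [t1 [t2 [-> H1 H2]]] := IH _ H.
  by exists (y :: t1), t2; rewrite /= eqxx.
have [t1 [t2 [-> H1 H2]]] := IH (x :: s1) H.
exists (y :: t1), t2; split => //=.
by case: eqP => // /neq.
Qed.

Lemma subseq_split_cat (w t1 t2 : seq T) : subseq w (t1 ++ t2) ->
  exists w1 w2, [/\ w = w1 ++ w2, subseq w1 t1 & subseq w2 t2].
Proof.
case/subseqP => m Hm ->.
exists (mask (take (size t1) m) t1), (mask (drop (size t1) m) t2).
split; try by apply: mask_subseq.
rewrite -mask_cat ?cat_take_drop // size_takel // Hm size_cat leq_addr //.
Qed.

Lemma block_bound (p : nat) : forall c (u v w : seq T),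
  (forall z, size z = p -> infix z v -> infix z u -> False) ->
  subseq w u -> subseq w v -> c * p <= size v ->
  2 * size w + c <= size u + size v.
Proof.
elim=> [|c IH] u v w Hz Hu Hv Hc.
  rewrite addn0 mul2n -addnn leq_add // size_subseq //.
have Hp : p <= size v by apply: leq_trans Hc; rewrite mulSn leq_addr.
move: Hv; rewrite -(cat_take_drop p v) => Hv.
have [w1 [w2 [Ew Hw1 Hw2]]] := subseq_split_cat Hv.
move: Hu; rewrite Ew => Hu.
have [u1 [u2 [Eu Hu1 Hu2]]] := subseq_cat_split Hu.
have Hrec : 2 * size w2 + c <= size u2 + size (drop p v).
  apply: IH => //.
  - move=> z Hsz Hzv Hzu; apply: (Hz z Hsz).
    + by rewrite -(cat_take_drop p v); apply: infix_catl.
    + by rewrite Eu; apply: infix_catl.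
  - by rewrite size_drop leq_subRL // -mulSn.
have Htk : size (take p v) = p by rewrite size_takel.
have Hblk : 2 * size w1 + 1 <= size u1 + p.
  have L1 := size_subseq Hw1; have L2 := size_subseq Hu1.
  rewrite Htk in L1.
  case: (ltngtP (size w1) p) => [lt||eq]; last first.
  - case: (ltngtP (size u1) p) => [lt'|gt'|eq'].
    + by move: L2; rewrite eq leqNgt lt'.
    + lia.
    + exfalso.
      have E1 : w1 = take p v.
        by apply/eqP; rewrite -(size_subseq_leqif Hw1) Htk eq.
      have E2 : w1 = u1.
        by apply/eqP; rewrite -(size_subseq_leqif Hu1) eq eq'.
      apply: (Hz w1).
      * by rewrite E1 Htk.
      * by rewrite E1 -{2}(cat_take_drop p v) prefix_infix.
      * by rewrite Eu E2 prefix_infix.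
  - lia.
  - lia.

rewrite Eu !size_cat.
rewrite Htk.
lia.
Qed.
End Comb.

Section L.
Variable A : finType.
Implicit Types (u v w : seq A).

Lemma lcs_ge u v w : subseq w u -> subseq w v -> size w <= lcs u v.
Proof.
case/subseqP => m Hm -> Hv.
have Hm' : size m == size u by apply/eqP.
pose mt : (size u).-tuple bool := Tuple Hm'.
by apply: (@leq_bigmax_cond _ _ (fun m : (size u).-tuple bool => size (mask m u)) mt).
Qed.

Lemma lcs_le u v B : (forall w, subseq w u -> subseq w v -> size w <= B) ->
  lcs u v <= B.
Proof. by move=> H; apply/bigmax_leqP => m Hm; apply: H => //; apply: mask_subseq. Qed.

Lemma lcs_le_size u v : lcs u v <= size u.
Proof. by apply: lcs_le => w Hw _; apply: size_subseq. Qed.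

Lemma lcs_le_size2 u v : lcs u v <= size v.
Proof. by apply: lcs_le => w _ Hw; apply: size_subseq. Qed.

Lemma factor0 (x : config A) l : Defs.factor x 0 l = mkseq x l.
Proof. by rewrite /Defs.factor subn0; by []. Qed.

Lemma mkseqD (g : nat -> A) a b :
  mkseq g (a + b) = mkseq g a ++ mkseq (fun n => g (a + n)) b.
Proof. rewrite /mkseq iotaD map_cat add0n -(addn0 a) iotaDl -map_comp addn0 /=; congr (_ ++ _); apply: eq_map => n /=. Qed.

Lemma iter_sigma k (x : config A) n : iter k (@sigma A) x n = x (n + k).
Proof.
elim: k n => [|k IH] n; first by rewrite addn0.
by rewrite iterS /sigma IH addSnnS.
Qed.

Lemma lcs_shift (x : config A) k l :
  l - k <= lcs (Defs.factor (iter k (@sigma A) x) 0 l) (Defs.factor x 0 l).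
Proof.
rewrite !factor0.
have [kl|lk] := leqP k l; last first.
  by have -> : l - k = 0 by lia.
pose w := mkseq (fun n => x (k + n)) (l - k).
have <- : size w = l - k by rewrite size_mkseq.
apply: lcs_ge.
  have -> : l = (l - k) + k by lia.
  rewrite mkseqD.
  have -> : mkseq (iter k (sigma (A:=A)) x) (l - k) = w.
    by apply: eq_mkseq => n; rewrite iter_sigma addnC.
  by apply: prefix_subseq.
have -> : l = k + (l - k) by lia.
rewrite mkseqD /w.
by apply: suffix_subseq.
Qed.


Local Open Scope ring_scope.
Notation RR := Rdefinitions.R.

Lemma lev_eq (y x : config A) l :
  levenshtein (Defs.factor y 0 l) (Defs.factor x 0 l) = l%:R - (lcs (Defs.factor y 0 l) (Defs.factor x 0 l))%:R :> RR.
Proof.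
rewrite /levenshtein !factor0 !size_mkseq natrD.
set a : RR := l%:R; set b : RR := _%:R; lra.
Qed.

Lemma lev_ge0 (y x : config A) l :
  0 <= levenshtein (Defs.factor y 0 l) (Defs.factor x 0 l) :> RR.
Proof.
rewrite lev_eq subr_ge0 ler_nat.
by have := lcs_le_size (Defs.factor y 0 l) (Defs.factor x 0 l); rewrite factor0 size_mkseq.
Qed.

Lemma shift_feldman k (x : config A) : feldman (iter k (@sigma A) x) x = 0%E.
Proof.
rewrite /feldman; apply: (cvg_limn_einf_sup _).2.
apply: cvg_EFin; first by apply: nearW.
apply/cvgr0Pnorm_le => e e0 /=.
have H := proj1 (@cvgr0Pnorm_le RR RR^o _ _ _ harmonic) (@cvg_harmonic RR) (e / (2 * k + 1)%:R).
have : 0 < e / (2 * k + 1)%:R by rewrite divr_gt0 // ltr0n addn1.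
move=> /H {H}; apply: filterS => n /= Hn.
set L := levenshtein _ _.
have L0 : 0 <= L by apply: lev_ge0.
have Lk : L <= k%:R.
  rewrite /L lev_eq lerBlDr -natrD ler_nat.
  have := lcs_shift x k n; lia.
have [->|n0] := eqVneq n 0%N.
  by rewrite invr0 mulr0 normr0 ltW.
have n0' : (0 < n)%N by rewrite lt0n.
have np : 0 < n%:R :> RR by rewrite ltr0n.
rewrite ger0_norm ?divr_ge0 // ler_pdivrMr //.
move: Hn; rewrite /harmonic /= ger0_norm ?invr_ge0 ?ler0n //.
rewrite ler_pdivlMr ?ltr0n ?addn1 // => Hn.
have : (1 <= n%:R :> RR) by rewrite ler1n.
rewrite -[(2 * k).+1]addn1 natrD natrM mulrC ler_pdivrMr in Hn; last first.
  by rewrite ltr0n.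
have N1 : (1 <= n%:R :> RR) by rewrite ler1n.
move: Hn N1 Lk L0.
set N : RR := n%:R; set K : RR := k%:R => Hn N1 Lk L0.
have K0 : 0 <= K by rewrite ler0n.
nra.
Qed.

Lemma lcs_attained (u v : seq A) : exists w, [/\ subseq w u, subseq w v & size w = lcs u v].
Proof.
have Hc : (0 < #|[pred m : (size u).-tuple bool | subseq (mask m u) v]|)%N.
  apply/card_gt0P; exists (nseq_tuple (size u) false).
  by rewrite inE /= mask_false sub0seq.
have [m Hm E] := eq_bigmax_cond (fun m : (size u).-tuple bool => size (mask m u)) Hc.
exists (mask m u); split; first exact: mask_subseq.
  by move: Hm; rewrite inE.
by rewrite /lcs E.
Qed.


Lemma nth_cat_mid (T : Type) (x0 : T) (s1 z s2 : seq T) t : (t < size z)%N ->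
  nth x0 (s1 ++ z ++ s2) (size s1 + t) = nth x0 z t.
Proof. by move=> H; rewrite nth_cat ltnNge leq_addr /= addKn nth_cat H. Qed.

Lemma common_window (y x : config A) P : (0 < P)%N -> feldman y x = 0%E ->
  exists i j, forall t, (t < P)%N -> y (i + t) = x (j + t).
Proof.
move=> P0 H0; apply: contrapT => Hn.
have Hno : forall l z, size z = P -> infix z (Defs.factor y 0 l) ->
    infix z (Defs.factor x 0 l) -> False.
  move=> l z Hs /infixP [s1 [s2 Ey]] /infixP [s3 [s4 Ex]]; apply: Hn.
  exists (size s1), (size s3) => t Ht.
  have Sy := congr1 size Ey; have Sx := congr1 size Ex.
  rewrite factor0 size_mkseq !size_cat in Sy.
  rewrite factor0 size_mkseq !size_cat in Sx.
  have := congr1 (fun s => nth (y 0) s (size s1 + t)) Ey.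
  have := congr1 (fun s => nth (y 0) s (size s3 + t)) Ex.
  rewrite /= !factor0 !nth_mkseq; [| by rewrite Sy Hs ltn_add2l ltn_addr | by rewrite Sx Hs ltn_add2l ltn_addr].
  by rewrite !nth_cat_mid ?Hs // => -> ->.
pose ip : RR := (4 * P)%:R^-1.
have ip0 : 0 < ip by rewrite invr_gt0 ltr0n muln_gt0.
have Hb : forall l, (P <= l)%N ->
    ip <= levenshtein (Defs.factor y 0 l) (Defs.factor x 0 l) / l%:R.
  move=> l Pl.
  have [w [Hw1 Hw2 Hw]] := lcs_attained (Defs.factor y 0 l) (Defs.factor x 0 l).
  have B := @block_bound A P (l %/ P) _ _ w (fun z a b c => Hno l z a c b) Hw1 Hw2.
  rewrite factor0 size_mkseq leq_divM in B.
  have {}B : (2 * lcs (Defs.factor y 0 l) (Defs.factor x 0 l) + l %/ P <= l + l)%N.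
    by rewrite -Hw; have := B isT; rewrite !factor0 !size_mkseq.
  have q1 : (0 < l %/ P)%N by rewrite divn_gt0.
  have Hq : (l <= 2 * (P * (l %/ P)))%N.
    have := divn_eq l P; have := ltn_pmod l P0.
    have : (P <= P * (l %/ P))%N by rewrite leq_pmulr.
    lia.
  have lp : 0 < l%:R :> RR by rewrite ltr0n; lia.
  rewrite lev_eq ler_pdivlMr //.
  move: B Hq; set M := lcs _ _; set q := (l %/ P)%N => B Hq.
  have B' : (2 * M%:R + q%:R <= 2 * l%:R :> RR).
    by move: B; rewrite -(ler_nat RR) !natrD; lra.
  have Hq' : (l%:R <= 2 * (P%:R * q%:R) :> RR).
    by move: Hq; rewrite -(ler_nat RR) !natrM.
  have E : ip * (4 * P%:R) = 1.
    by rewrite /ip natrM mulVf // mulf_neq0 // pnatr_eq0; lia.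
  have : ip * l%:R <= ip * (2 * (P%:R * q%:R)) by rewrite ler_pM2l.
  have -> : ip * (2 * (P%:R * q%:R)) = q%:R / 2.
    have -> : ip * (2 * (P%:R * q%:R)) = (ip * (4 * P%:R)) * (q%:R / 2).
      by field.
    by rewrite E mul1r.
  lra.
move: H0; rewrite /feldman limn_esup_lim => H0.
have : (ip%:E <= limn (esups (fun l => (levenshtein (Defs.factor y 0 l) (Defs.factor x 0 l) / l%:R)%:E)))%E.
  apply: lime_ge; first exact: is_cvg_esups.
  near=> n.
  apply: (le_trans _ (ereal_sup_ubound _)); last by exists n => /=.
  rewrite lee_fin; apply: Hb.
  by near: n; exists P.
rewrite H0 lee_fin => /(lt_le_trans ip0); rewrite ltxx.
Unshelve. all: by end_near.
Qed.

End L.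

Section P.
Variable A : finType.

Lemma per_mod (y : config A) P : (forall n, y (n + P) = y n) ->
  forall n, y n = y (n %% P).
Proof.
move=> Hy n; rewrite {1}(divn_eq n P); move: (n %/ P) => q.
elim: q => [|q IH]; first by rewrite mul0n add0n.
have -> : (q.+1 * P + n %% P = (q * P + n %% P) + P)%N by rewrite mulSn; lia.
by rewrite Hy.
Qed.

Lemma per_eq (y : config A) P : (forall n, y (n + P) = y n) ->
  forall n m, n %% P = m %% P -> y n = y m.
Proof. by move=> Hy n m E; rewrite (per_mod Hy n) (per_mod Hy m) E. Qed.

Lemma window_shift (y x : config A) P i j : (0 < P)%N ->
  (forall n, y (n + P) = y n) -> (forall n, x (n + P) = x n) ->
  (forall t, (t < P)%N -> y (i + t) = x (j + t)) ->
  exists2 r, (r < P)%N & forall n, y n = x (n + r).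
Proof.
move=> P0 Hy Hx Hw.
have mP : (i %% P < P)%N by rewrite ltn_pmod.
exists ((j + P - i %% P) %% P); first by rewrite ltn_pmod.
move=> n.
have tP : ((n + P - i %% P) %% P < P)%N by rewrite ltn_pmod.
rewrite (per_eq Hy (m := i + (n + P - i %% P) %% P)); last first.
  rewrite modnDmr.
  have -> : (i + (n + P - i %% P) = (i %/ P).+1 * P + n)%N.
    have := divn_eq i P; move: (i %/ P) (i %% P) mP => q m mP E.
    rewrite mulSn; lia.
  by rewrite modnMDl.
rewrite Hw //; apply: per_eq => //.
rewrite modnDmr modnDmr; congr modn; lia.
Qed.

Lemma addRN (a b : nat) : (a + b)%R = (a + b)%N.
Proof. by []. Qed.

Variable delta : nat.
Variable f : delta.-tuple A -> A.

Lemma CA_per (x : config A) P : (forall n, x (n + P) = x n) ->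
  forall n, CA f x (n + P) = CA f x n.
Proof.
move=> Hx n; rewrite /CA; congr f; apply: eq_from_tnth => i.
rewrite !tnth_mktuple !addRN; have -> : (n + P + i = (n + i) + P)%N by lia.
by rewrite Hx.
Qed.

Lemma CA_eval (x : config A) n (g : nat -> A) :
  (forall i, (i < delta)%N -> x (n + i) = g i) ->
  CA f x n = f [tuple g (val i) | i < delta].
Proof.
move=> H; rewrite /CA; congr f; apply: eq_from_tnth => i.
rewrite !tnth_mktuple addRN; apply: H; exact: ltn_ord.
Qed.

Lemma tuple_nth (a : A) (w : delta.-tuple A) : [tuple nth a w (val i) | i < delta] = w.
Proof. by apply: eq_from_tnth => i; rewrite tnth_mktuple (tnth_nth a). Qed.

End P.

Section K.
Variable A : finType.
Variable delta : nat.
Variable f : delta.-tuple A -> A.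
Hypothesis H : forall x : config A, feldman (CA f x) x = 0%E.

Lemma const_fix a : f [tuple a | _ < delta] = a.
Proof.
have [i [j Hw]] := common_window (ltn0Sn 0) (H (fun _ => a)).
have := Hw 0%N isT; rewrite (CA_eval f (g := fun _ => a)) //.
Qed.

Definition bt (a b : A) (j : nat) : delta.-tuple A :=
  [tuple (if val i == j then b else a) | i < delta].

Lemma key (d0 : (0 < delta)%N) a b (w : delta.-tuple A) : a != b ->
  has (fun c => c != a) w ->
  exists2 r, (r < delta)%N & [/\ f (bt a b r) = b,
    (forall j, (j < delta)%N -> j != r -> f (bt a b j) = a) & f w = nth a w r].
Proof.
move=> ab Hhas.
set d := delta.
have d0' : (0 < d)%N by [].
pose P := (10 * d)%N.
have EP : P = (10 * d)%N by [].
have P0 : (0 < P)%N by rewrite muln_gt0.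
pose u t := if t == d then b else if (3 * d <= t < 4 * d)%N then nth a w (t - 3 * d) else a.
have u_b : u d = b by rewrite /u eqxx.
have u_w : forall t, (3 * d <= t < 4 * d)%N -> u t = nth a w (t - 3 * d).
  move=> t Ht; rewrite /u ifN ?Ht //; apply/eqP; lia.
have u_a : forall t, t != d -> ~~ (3 * d <= t < 4 * d)%N -> u t = a.
  by move=> t H1 H2; rewrite /u (negbTE H1) (negbTE H2).
pose x : config A := fun n => u (n %% P).
have Hx : forall n, x (n + P) = x n by move=> n; rewrite /x modnDr.
have xv : forall n, (n < P)%N -> x n = u n by move=> n Hn; rewrite /x modn_small.
have xa : forall m, ((m < P) && (m != d) && ~~ (3 * d <= m < 4 * d))%N
                    || (P <= m < P + d)%N -> x m = a.
  move=> m /orP [/andP [/andP [H1 H2] H3]|/andP [H1 H2]].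
    by rewrite xv // u_a.
  have -> : m = (m - P) + P by lia.
  rewrite Hx xv; last by lia.
  by rewrite u_a //; [apply/eqP; lia | apply/negP => /andP; lia].
have [i1 [j1 Hw]] := common_window P0 (H x).
have [r rP Hr] := window_shift P0 (CA_per f Hx) Hx Hw.
have Ya : forall n, (forall i, (i < d)%N -> x (n + i) = a) -> CA f x n = a.
  by move=> n Hn; rewrite (CA_eval f (g := fun _ => a)) // const_fix.
have Ybt : forall j, (j < d)%N -> CA f x (d - j) = f (bt a b j).
  move=> j jd; rewrite (CA_eval f (g := fun i => if i == j then b else a)) //.
  move=> i0 Hi0; case: eqP => [->|ne].
    have -> : (d - j + j = d)%N by lia.
    by rewrite xv ?u_b //; lia.
  rewrite xv; last by lia.
  by rewrite u_a //; [apply/eqP; lia | apply/negP => /andP; lia].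
have Yw : CA f x (3 * d) = f w.
  rewrite (CA_eval f (g := fun i => nth a w i)) ?tuple_nth //.
  by move=> i0 Hi0; rewrite xv ?u_w; [congr nth; lia | lia | lia].
have [rd|dr] := ltnP r d.
  exists r => //; split.
  - rewrite -Ybt // Hr; have -> : (d - r + r = d)%N by lia.
    by rewrite xv ?u_b //; lia.
  - move=> j jd jr; rewrite -Ybt // Hr xa //; apply/orP; left.
    by apply/andP; split; [apply/andP; split; [lia|apply/eqP; lia]|apply/negP => /andP; lia].
  - by rewrite -Yw Hr xv ?u_w; [congr nth; lia|lia|lia].
exfalso.
have E1 := Hr (d + P - r)%N.
have EE : (d + P - r + r = d + P)%N by lia.
rewrite EE in E1; clear EE.
rewrite Hx xv ?u_b in E1; last by lia.
have n1 : (2 * d < d + P - r < 4 * d)%N.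
  apply/negPn/negP => Hn.
  move: E1; rewrite Ya; first by move=> E; move: ab; rewrite E eqxx.
  move=> i0 Hi0; apply: xa; move: Hn; rewrite negb_and -!leqNgt => /orP Hn.
  have rP' : (r < P)%N := rP.
  case: (ltnP (d + P - r + i0) P) => h1.
    apply/orP; left; apply/andP; split; [apply/andP; split; [lia|apply/eqP; lia]|].
    by apply/negP => /andP; case: Hn; lia.
  by apply/orP; right; apply/andP; split; lia.
case/hasP: Hhas => c cw cna.
pose e := index c w.
have ed : (e < d)%N by rewrite /d -(size_tuple w) index_mem.
have ce : nth a w e = c by rewrite nth_index.
have E2 := Hr (3 * d + e + P - r)%N.
have EE : (3 * d + e + P - r + r = (3 * d + e) + P)%N by lia.
rewrite EE in E2; clear EE.
rewrite Hx xv ?u_w in E2; [|lia|lia].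
have EE : (3 * d + e - 3 * d = e)%N by lia.
rewrite EE in E2; clear EE.
rewrite ce Ya in E2; first by move: cna; rewrite -E2 eqxx.
move=> i0 Hi0; apply: xa; apply/orP; left.
rewrite /P.
apply/andP; split; first (apply/andP; split); [lia|apply/eqP; lia|apply/negP => /andP; lia].
Qed.

End K.

Unset Implicit Arguments.

Theorem mainTheorem10 (A : finType) (delta : nat) (f : delta.-tuple A -> A) :
  (0 < delta)%N ->
  ((forall x : config A, feldman (CA f x) x = 0%E) <->
   (exists k : nat, CA f = iter k (@sigma A))).
Proof.
move=> d0; split; last first.
  by case=> k ->; move=> x; apply: shift_feldman.
move=> H.
case: (pselect (exists a b : A, a != b)) => [[a [b ab]]|nab]; last first.
  exists 0%N; apply: funext => x; apply: funext => n /=.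
  case: (eqVneq (CA f x n) (x n)) => // ne; exfalso; apply: nab.
  by exists (CA f x n), (x n).
have Hbt : has (fun c => c != a) (nseq_tuple delta b).
  by rewrite /= has_nseq d0 /= eq_sym.
have [k kd [Hk1 Hk2 _]] := key H d0 ab Hbt.
have Hf : forall w, f w = nth a w k.
  move=> w; case: (boolP (has (fun c => c != a) w)) => Hw.
    have [r rd [Hr1 Hr2 Hr3]] := key H d0 ab Hw.
    suff -> : k = r by [].
    apply/eqP; apply/negPn/negP => ne.
    have := Hk2 r rd; rewrite eq_sym => /(_ ne); rewrite Hr1 => E.
    by move: ab; rewrite E eqxx.
  have Wa : forall c, c \in w -> c = a.
    by move=> c cw; apply/eqP; move/hasPn: Hw => /(_ c cw); rewrite negbK.
  have -> : nth a w k = a by apply: Wa; rewrite mem_nth // size_tuple.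
  have -> : w = [tuple a | _ < delta].
    by apply: eq_from_tnth => i; rewrite tnth_mktuple; apply: Wa; apply: mem_tnth.
  by rewrite const_fix.
exists k; apply: funext => x; apply: funext => n.
rewrite iter_sigma /CA Hf.
rewrite (_ : k = val (Ordinal kd)) // -tnth_nth tnth_mktuple //.
Qed.
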